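(* Let $S$ be a complete starsemiring, let $n\ge 1$, let $\Gamma$ be an alphabet, and let $M\in (S^{n\times n})^{\Gamma^*\times\Gamma^*}$ be a pushdown transition matrix. Then for all $p\in\Gamma$ and $\pi\in\Gamma^*$, $$(M^* )_{p\pi,\epsilon}=(M^* )_{p,\epsilon}\,(M^* )_{\pi,\epsilon}.$$
   Context: A complete starsemiring is a semiring $S$ in which sums $\sum_{i\in I}s_i$ of arbitrary families (arbitrary index sets $I$) are defined, extending finite sums and satisfying the usual infinite associativity, commutativity and distributivity laws, and which is equipped with the star operation $s^*=\sum_{j\ge 0}s^j$. Matrices over $S$ (also with infinite index sets) are added and multiplied by the usual formulas, using these infinite sums. An element $M\in (S^{n\times n})^{\Gamma^*\times\Gamma^*}$ is a $\Gamma^*\times\Gamma^*$ matrix whose blocks $M_{\pi_1,\pi_2}$ are $n\times n$ matrices over $S$. Such an $M$ is a pushdown transition matrix if (i) for each $p\in\Gamma$ only finitely many blocks $M_{p,\pi}$, $\pi\in\Gamma^*$, are nonzero, and (ii) for all $\pi_1,\pi_2\in\Gamma^*$: $M_{\pi_1,\pi_2}=M_{p,\pi}$ if there are $p\in\Gamma$, $\pi,\pi'\in\Gamma^*$ with $\pi_1=p\pi'$ and $\pi_2=\pi\pi'$, and $M_{\pi_1,\pi_2}=0$ otherwise. $M^*=\sum_{m\ge0}M^m$, and $(M^* )_{\pi,\pi'}$ denotes its $(\pi,\pi')$-block, an $n\times n$ matrix; $\epsilon$ is the empty word. *)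

(* Defs.v *)
From HB Require Import structures.
From mathcomp Require Import all_boot all_order all_algebra.
Set Implicit Arguments. Unset Strict Implicit. Unset Printing Implicit Defensive.
Import GRing.Theory.
Local Open Scope ring_scope.

(* A complete semiring: a semiring S with sums [csum I a] of arbitrary families
   a : I -> S (I an arbitrary type), satisfying Kuich's axioms: empty sums are 0,
   one- and two-element sums agree with the semiring's finite sums, infinite
   associativity/commutativity over arbitrary partitions (a partition of I into
   blocks indexed by J is given by a map f : I -> J, block j = {i | f i = j}),
   and infinite distributivity on both sides. *)
Record complete_sum (S : pzSemiRingType) := CompleteSum {
  csum : forall I : Type, (I -> S) -> S;
  csum_empty : forall (I : Type) (a : I -> S), (I -> False) -> csum a = 0;
  csum_single : forall (I : Type) (a : I -> S) (j : I),
      (forall i, i = j) -> csum a = a j;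
  csum_pair : forall (I : Type) (a : I -> S) (j k : I), j <> k ->
      (forall i, i = j \/ i = k) -> csum a = a j + a k;
  csum_partition : forall (I J : Type) (f : I -> J) (a : I -> S),
      csum (fun j : J => csum (fun i : {i : I | f i = j} => a (proj1_sig i)))
      = csum a;
  csum_distrl : forall (I : Type) (c : S) (a : I -> S),
      csum (fun i => c * a i) = c * csum a;
  csum_distrr : forall (I : Type) (c : S) (a : I -> S),
      csum (fun i => a i * c) = csum a * c
}.
Arguments csum {S} _ {I} _.

Definition cstar (S : pzSemiRingType) (cs : complete_sum S) (s : S) : S :=
  csum cs (fun j : nat => s ^+ j).

Definition bmat (S : pzSemiRingType) (Gamma : finType) (n : nat) :=
  seq Gamma -> seq Gamma -> 'M[S]_n.

Section BlockMatrices.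
Variables (S : pzSemiRingType) (cs : complete_sum S) (Gamma : finType) (n : nat).

Definition mxcsum (I : Type) (A : I -> 'M[S]_n) : 'M[S]_n :=
  \matrix_(k < n, l < n) csum cs (fun i : I => A i k l).

Definition bmul (A B : bmat S Gamma n) : bmat S Gamma n :=
  fun p1 p2 => mxcsum (fun p : seq Gamma => A p1 p *m B p p2).

Definition bone : bmat S Gamma n :=
  fun p1 p2 => if p1 == p2 then 1%:M else 0.

Fixpoint bpow (M : bmat S Gamma n) (m : nat) : bmat S Gamma n :=
  match m with
  | 0 => bone
  | m'.+1 => bmul (bpow M m') M
  end.

Definition bstar (M : bmat S Gamma n) : bmat S Gamma n :=
  fun p1 p2 => mxcsum (fun m : nat => bpow M m p1 p2).

Definition pushdown_transition_matrix (M : bmat S Gamma n) : Prop :=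
  (forall p : Gamma, exists l : seq (seq Gamma),
      forall pi : seq Gamma, M [:: p] pi <> 0 -> pi \in l)
  /\
  (forall p1 p2 : seq Gamma,
      (forall (p : Gamma) (pi pi' : seq Gamma),
          p1 = p :: pi' -> p2 = pi ++ pi' -> M p1 p2 = M [:: p] pi)
      /\
      ((~ exists (p : Gamma) (pi pi' : seq Gamma),
           p1 = p :: pi' /\ p2 = pi ++ pi') -> M p1 p2 = 0)).

End BlockMatrices.

(* Main.v *)
Require Import Defs.
From HB Require Import structures.
From mathcomp Require Import all_boot all_order all_algebra.
From Stdlib Require Import FunctionalExtensionality ProofIrrelevance ClassicalEpsilon.
Import GRing.Theory.
Local Open Scope ring_scope.

Section Helpers.
Local Set Implicit Arguments.
Variables (S : pzSemiRingType) (cs : complete_sum S).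

Lemma csum_ext (I : Type) (a b : I -> S) : (forall i, a i = b i) -> csum cs a = csum cs b.
Proof. by move=> h; rewrite (functional_extensionality _ _ h). Qed.

Lemma csum0 (I : Type) : csum cs (fun _ : I => 0) = 0.
Proof.
transitivity (csum cs (fun i : I => 0 * (fun _ : I => 0 : S) i)).
  by apply: csum_ext => i; rewrite mul0r.
by rewrite csum_distrl mul0r.
Qed.

Lemma csum_bij (I J : Type) (e : I -> J) (a : J -> S) :
  injective e -> (forall j, exists i, e i = j) ->
  csum cs (fun i => a (e i)) = csum cs a.
Proof.
move=> ei es; rewrite -(csum_partition cs e (fun i => a (e i))).
apply: csum_ext => j; case: (es j) => i0 hi0.
rewrite (@csum_single _ cs _ _ (exist (fun i => e i = j) i0 hi0)) /=; first by rewrite hi0.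
case=> i hi; have ? : i = i0 by apply: ei; rewrite hi hi0.
subst; f_equal; apply: proof_irrelevance.
Qed.

Lemma csum_bool (h : bool -> S) : csum cs h = h true + h false.
Proof. by apply: csum_pair => // -[]; auto. Qed.

Lemma csum_sub (I K : Type) (e : K -> I) (a : I -> S) :
  injective e -> (forall i, (forall k, e k <> i) -> a i = 0) ->
  csum cs a = csum cs (fun k => a (e k)).
Proof.
move=> ei hz.
pose f i := if excluded_middle_informative (exists k, e k = i) then true else false.
rewrite -(csum_partition cs f a) csum_bool.
have -> : csum cs (fun i : {i | f i = false} => a (sval i)) = 0.
  rewrite -(csum0 {i | f i = false}); apply: csum_ext => -[i /= hi].
  apply: hz => k hk; move: hi; rewrite /f.
  by case: excluded_middle_informative => // -[]; exists k.
rewrite addr0.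
have fe k : f (e k) = true.
  by rewrite /f; case: excluded_middle_informative => // -[]; exists k.
symmetry.
apply: (@csum_bij K {i | f i = true} (fun k => exist (fun i => f i = true) (e k) (fe k))
          (fun x : {i | f i = true} => a (sval x))).
- by move=> k1 k2 [] /ei.
- case=> i hi.
  have [k hk] : exists k, e k = i.
    by move: hi; rewrite /f; case: excluded_middle_informative.
  exists k.
  subst i; f_equal; apply: proof_irrelevance.
Qed.

Lemma csum_prod (I J : Type) (a : I * J -> S) :
  csum cs a = csum cs (fun i => csum cs (fun j => a (i, j))).
Proof.
rewrite -(csum_partition cs fst a); apply: csum_ext => i.
symmetry.
apply: (@csum_bij J {x : I * J | x.1 = i} (fun j => exist (fun x : I * J => x.1 = i) (i, j) erefl)
          (fun x : {x : I * J | x.1 = i} => a (sval x))).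
- by move=> j1 j2 [].
- by case=> -[i' j] /= h; subst i'; exists j.
Qed.

Lemma csum_swap (I J : Type) (a : I * J -> S) :
  csum cs a = csum cs (fun y : J * I => a (y.2, y.1)).
Proof.
symmetry.
apply: (@csum_bij (J * I) (I * J) (fun y : J * I => (y.2, y.1)) a).
- by move=> [x1 y1] [x2 y2] /= [-> ->].
- by move=> [x y]; exists (y, x).
Qed.

Lemma csumD (I : Type) (a b : I -> S) :
  csum cs (fun i => a i + b i) = csum cs a + csum cs b.
Proof.
pose g (x : I * bool) := if x.2 then a x.1 else b x.1.
transitivity (csum cs g).
  by rewrite csum_prod; apply: csum_ext => i; rewrite csum_bool.
by rewrite csum_swap csum_prod csum_bool.
Qed.

Lemma csum_big (I : Type) (m : nat) (F : I -> 'I_m -> S) :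
  csum cs (fun i => \sum_(j < m) F i j) = \sum_(j < m) csum cs (fun i => F i j).
Proof.
elim: m F => [|m IH] F.
  rewrite big_ord0; transitivity (csum cs (fun _ : I => 0 : S)); last exact: csum0.
  by apply: csum_ext => i; rewrite big_ord0.
rewrite big_ord_recr /=.
have -> : csum cs (fun i => \sum_(j < m.+1) F i j)
   = csum cs (fun i => \sum_(j < m) F i (widen_ord (leqnSn m) j) + F i ord_max).
  by apply: csum_ext => i; rewrite big_ord_recr.
by rewrite csumD IH.
Qed.

Variable n : nat.
Implicit Types (I J K : Type).

Lemma mxcsumE I (A : I -> 'M[S]_n) k l : mxcsum cs A k l = csum cs (fun i => A i k l).
Proof. by rewrite mxE. Qed.

Lemma mxcsum_ext I (A B : I -> 'M[S]_n) : (forall i, A i = B i) -> mxcsum cs A = mxcsum cs B.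
Proof. by move=> h; rewrite (functional_extensionality _ _ h). Qed.

Lemma mxcsum0 I : mxcsum cs (fun _ : I => 0 : 'M[S]_n) = 0.
Proof.
apply/matrixP => k l; rewrite mxcsumE mxE.
transitivity (csum cs (fun _ : I => 0 : S)); last exact: csum0.
by apply: csum_ext => i; rewrite ?mxE.
Qed.

Lemma mxcsum_bij I J (e : I -> J) (A : J -> 'M[S]_n) :
  injective e -> (forall j, exists i, e i = j) ->
  mxcsum cs (fun i => A (e i)) = mxcsum cs A.
Proof.
move=> ei es; apply/matrixP => k l; rewrite !mxcsumE.
exact: (@csum_bij I J e (fun j => A j k l)).
Qed.

Lemma mxcsum_sub I K (e : K -> I) (A : I -> 'M[S]_n) :
  injective e -> (forall i, (forall k, e k <> i) -> A i = 0) ->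
  mxcsum cs A = mxcsum cs (fun k => A (e k)).
Proof.
move=> ei hz; apply/matrixP => k l; rewrite !mxcsumE.
apply: (@csum_sub I K e (fun i => A i k l)) => // i hi.
by rewrite hz // mxE.
Qed.

Lemma mxcsum_single I (A : I -> 'M[S]_n) j : (forall i, i = j) -> mxcsum cs A = A j.
Proof.
move=> h; apply/matrixP => k l; rewrite !mxcsumE.
exact: (@csum_single _ cs I (fun i => A i k l) j).
Qed.

Lemma mxcsum_prod I J (A : I * J -> 'M[S]_n) :
  mxcsum cs A = mxcsum cs (fun i => mxcsum cs (fun j => A (i, j))).
Proof.
apply/matrixP => k l; rewrite !mxcsumE csum_prod.
by apply: csum_ext => i; rewrite mxcsumE.
Qed.

Lemma mxcsum_swap I J (A : I * J -> 'M[S]_n) :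
  mxcsum cs A = mxcsum cs (fun y : J * I => A (y.2, y.1)).
Proof. by apply/matrixP => k l; rewrite !mxcsumE csum_swap. Qed.

Lemma mxcsum_mull I (C : 'M[S]_n) (A : I -> 'M[S]_n) :
  mxcsum cs (fun i => C *m A i) = C *m mxcsum cs A.
Proof.
apply/matrixP => k l; rewrite mxcsumE mxE.
transitivity (csum cs (fun i => \sum_(j < n) C k j * A i j l)).
  by apply: csum_ext => i; rewrite mxE.
rewrite csum_big; apply: eq_bigr => j _.
by rewrite mxcsumE csum_distrl.
Qed.

Lemma mxcsum_mulr I (C : 'M[S]_n) (A : I -> 'M[S]_n) :
  mxcsum cs (fun i => A i *m C) = mxcsum cs A *m C.
Proof.
apply/matrixP => k l; rewrite mxcsumE mxE.
transitivity (csum cs (fun i => \sum_(j < n) A i k j * C j l)).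
  by apply: csum_ext => i; rewrite mxE.
rewrite csum_big; apply: eq_bigr => j _.
by rewrite mxcsumE csum_distrr.
Qed.

End Helpers.

Section Main.
Local Set Implicit Arguments.
Variables (S : pzSemiRingType) (cs : complete_sum S) (Gamma : finType) (n : nat).
Implicit Types A B C : bmat S Gamma n.

Lemma funext2 A B : (forall x y, A x y = B x y) -> A = B.
Proof.
move=> h; apply: functional_extensionality => x.
by apply: functional_extensionality => y.
Qed.

Lemma bmulA A B C : bmul cs (bmul cs A B) C = bmul cs A (bmul cs B C).
Proof.
apply: funext2 => x z; rewrite /bmul.
transitivity (mxcsum cs (fun y => mxcsum cs (fun u => A x u *m B u y *m C y z))).
  by apply: mxcsum_ext => y; rewrite -mxcsum_mulr.
rewrite -(mxcsum_prod cs (fun yu : seq Gamma * seq Gamma => A x yu.2 *m B yu.2 yu.1 *m C yu.1 z)).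
rewrite mxcsum_swap mxcsum_prod /=.
apply: mxcsum_ext => u; rewrite -mxcsum_mull; apply: mxcsum_ext => y.
by rewrite mulmxA.
Qed.

Lemma bmul1l A : bmul cs (bone S n) A = A.
Proof.
apply: funext2 => x y; rewrite /bmul.
rewrite (@mxcsum_sub _ cs _ _ _ (fun _ : unit => x)).
- by rewrite (@mxcsum_single _ cs _ _ _ tt) ?[bone _ _ _ _]/bone ?eqxx ?mul1mx // => -[].
- by move=> [] [].
- move=> u hu; rewrite /bone; case: eqP => [hx|_]; last by rewrite mul0mx.
  by case: (hu tt).
Qed.

Lemma bmul1r A : bmul cs A (bone S n) = A.
Proof.
apply: funext2 => x y; rewrite /bmul.
rewrite (@mxcsum_sub _ cs _ _ _ (fun _ : unit => y)).
- by rewrite (@mxcsum_single _ cs _ _ _ tt) ?[bone _ _ _ _]/bone ?eqxx ?mulmx1 // => -[].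
- by move=> [] [].
- move=> u hu; rewrite /bone; case: eqP => [hx|_]; last by rewrite mulmx0.
  by case: (hu tt).
Qed.

Lemma bpowSl (M : bmat S Gamma n) m : bpow cs M m.+1 = bmul cs M (bpow cs M m).
Proof.
elim: m => [|m IH]; first by rewrite /= bmul1l bmul1r.
transitivity (bmul cs (bmul cs M (bpow cs M m)) M); first by rewrite -IH.
by rewrite bmulA.
Qed.

Lemma catIr (s1 s2 r : seq Gamma) : s1 ++ r = s2 ++ r -> s1 = s2.
Proof.
move=> h; have sz : size s1 = size s2.
  by move/(congr1 size): h; rewrite !size_cat => /addIn.
by move/eqP: h; rewrite eqseq_cat // => /andP[/eqP].
Qed.

Variable M : bmat S Gamma n.
Hypothesis hM : pushdown_transition_matrix M.

Lemma M_step q r (X : seq Gamma -> 'M[S]_n) :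
  mxcsum cs (fun v => M (q :: r) v *m X v)
  = mxcsum cs (fun a => M [:: q] a *m X (a ++ r)).
Proof.
rewrite (@mxcsum_sub _ cs _ _ _ (fun a => a ++ r)).
- by apply: mxcsum_ext => a; rewrite ((hM.2 (q :: r) (a ++ r)).1 q a r).
- by move=> a b /catIr.
- move=> v hv; rewrite ((hM.2 (q :: r) v).2) ?mul0mx //.
  case=> p [pi [pi' [h1 h2]]]; case: h1 => hq hr; subst.
  exact: (hv pi).
Qed.

Lemma M_nil v : M [::] v = 0.
Proof. by apply: (hM.2 [::] v).2 => -[p [pi [pi' [h _]]]]. Qed.

Lemma AS q r m : bpow cs M m.+1 (q :: r) [::]
  = mxcsum cs (fun a => M [:: q] a *m bpow cs M m (a ++ r) [::]).
Proof. by rewrite bpowSl /bmul M_step. Qed.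

Lemma Anil m : bpow cs M m.+1 [::] [::] = 0.
Proof.
rewrite bpowSl /bmul; transitivity (mxcsum cs (fun _ : seq Gamma => 0 : 'M[S]_n)).
  by apply: mxcsum_ext => v; rewrite M_nil mul0mx.
exact: mxcsum0.
Qed.

Lemma key_nil m pi : bpow cs M m pi [::] = mxcsum cs (fun x : nat * nat =>
  if x.1 + x.2 == m then bpow cs M x.1 [::] [::] *m bpow cs M x.2 pi [::] else 0).
Proof.
rewrite (@mxcsum_sub _ cs _ _ _ (fun _ : unit => (0%N, m))).
- rewrite (@mxcsum_single _ cs _ _ _ tt) /=; last by case.
  by rewrite ?add0n eqxx mul1mx.
- by move=> [] [].
- move=> [[|a] b] h.
    case: eqP => // hb; exfalso; apply: (h tt); by rewrite -hb ?add0n.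
  by case: ifP => _ //; rewrite Anil mul0mx.
Qed.

Lemma key m w pi : bpow cs M m (w ++ pi) [::] = mxcsum cs (fun x : nat * nat =>
  if x.1 + x.2 == m then bpow cs M x.1 w [::] *m bpow cs M x.2 pi [::] else 0).
Proof.
elim: m w pi => [|m IH] [|q w] pi; try exact: key_nil.
- transitivity (mxcsum cs (fun _ : nat * nat => 0 : 'M[S]_n)); last first.
    symmetry; apply: mxcsum_ext => -[[|a] b].
      by case: ifP => _ //=; rewrite mul0mx.
    by have -> : ((a.+1, b).1 + (a.+1, b).2 == 0%N) = false by [].
  by rewrite mxcsum0.
- rewrite cat_cons AS.
  transitivity (mxcsum cs (fun a => M [:: q] a *m mxcsum cs (fun x : nat * nat =>
    if x.1 + x.2 == m then bpow cs M x.1 (a ++ w) [::] *m bpow cs M x.2 pi [::] else 0))).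
    by apply: mxcsum_ext => a; rewrite catA IH.
  transitivity (mxcsum cs (fun a => mxcsum cs (fun x : nat * nat =>
    if x.1 + x.2 == m then M [:: q] a *m bpow cs M x.1 (a ++ w) [::] *m bpow cs M x.2 pi [::] else 0))).
    apply: mxcsum_ext => a; rewrite -mxcsum_mull; apply: mxcsum_ext => x.
    by case: ifP => _; rewrite ?mulmx0 ?mulmxA.
  rewrite -(mxcsum_prod cs (fun ax : seq Gamma * (nat * nat) =>
    if ax.2.1 + ax.2.2 == m then M [:: q] ax.1 *m bpow cs M ax.2.1 (ax.1 ++ w) [::] *m bpow cs M ax.2.2 pi [::] else 0)).
  rewrite mxcsum_swap mxcsum_prod /=.
  transitivity (mxcsum cs (fun x : nat * nat => if x.1 + x.2 == m then
     bpow cs M x.1.+1 (q :: w) [::] *m bpow cs M x.2 pi [::] else 0)).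
    apply: mxcsum_ext => x; case: ifP => _; last exact: mxcsum0.
    by rewrite AS -mxcsum_mulr.
  rewrite (@mxcsum_sub _ cs _ _ _ (fun x : nat * nat => (x.1.+1, x.2)) (fun x : nat * nat =>
    if x.1 + x.2 == m.+1 then bpow cs M x.1 (q :: w) [::] *m bpow cs M x.2 pi [::] else 0)).
  + by apply: mxcsum_ext.
  + by move=> [a b] [c d] /= [-> ->].
  + move=> [[|a] b] h /=.
      by case: ifP => _ //; rewrite mul0mx.
    by case: (h (a, b)).
Qed.

End Main.

Theorem theorem1 (S : pzSemiRingType) (cs : complete_sum S) (n : nat)
  (Gamma : finType) (M : bmat S Gamma n) :
  (0 < n)%N ->
  pushdown_transition_matrix M ->
  forall (p : Gamma) (pi : seq Gamma),
    bstar cs M (p :: pi) [::] = bstar cs M [:: p] [::] *m bstar cs M pi [::].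
Proof.
move=> _ hM p pi; rewrite /bstar.
transitivity (mxcsum cs (fun m => mxcsum cs (fun x : nat * nat =>
  if x.1 + x.2 == m then bpow cs M x.1 [:: p] [::] *m bpow cs M x.2 pi [::] else 0))).
  by apply: mxcsum_ext => m; rewrite -(@key _ cs _ _ M hM m [:: p] pi).
rewrite -(mxcsum_prod cs (fun mx : nat * (nat * nat) =>
  if mx.2.1 + mx.2.2 == mx.1 then bpow cs M mx.2.1 [:: p] [::] *m bpow cs M mx.2.2 pi [::] else 0)).
rewrite mxcsum_swap mxcsum_prod /=.
transitivity (mxcsum cs (fun x : nat * nat => bpow cs M x.1 [:: p] [::] *m bpow cs M x.2 pi [::])).
  apply: mxcsum_ext => x.
  rewrite (@mxcsum_sub _ cs _ _ _ (fun _ : unit => x.1 + x.2)).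
  - by rewrite (@mxcsum_single _ cs _ _ _ tt) /= ?eqxx // => -[].
  - by move=> [] [].
  - move=> m hm; case: eqP => // hx; by case: (hm tt).
rewrite mxcsum_prod -mxcsum_mulr; apply: mxcsum_ext => a /=.
by rewrite -mxcsum_mull.
Qed.
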